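(* Let $c\neq o$ be vertices such that there is exactly one directed path $\pi$ from $c$ to $o$, and let $\delta=\delta_{co}$ be its length. Let $\bar L$ be the $(N-\delta-1)\times(N-\delta-1)$ principal submatrix of $L$ obtained by deleting the rows and columns indexed by the $\delta+1$ vertices of $\pi$. Then $$e_o^T\operatorname{adj}(sI+L)e_c=\vartheta(\pi)\,\det\big(sI_{N-\delta-1}+\bar L\big),$$ where the determinant of an empty matrix is $1$. Consequently, the roots $-\gamma_i$ of $h(s)=e_o^T\operatorname{adj}(sI+L)e_c$ are exactly the eigenvalues of $-\bar L$.
   Context: $\mathcal G$ is a weighted directed graph on $\{1,\dots,N\}$ with adjacency matrix $A=[a_{ij}]$. Here $a_{ij}>0$ if there is an arc from $j$ to $i$, of weight $a_{ij}$, and $a_{ij}=0$ otherwise (no self-loops). The Laplacian is $L=D-A$ with $D=\mathrm{diag}(\sum_j a_{ij})$. A directed path from $u$ to $w$ is a sequence of pairwise distinct vertices $u=v_0,\dots,v_\ell=w$ with an arc from $v_k$ to $v_{k+1}$ for each $k$. Its length is $\ell$ and its weight $\vartheta(\pi)$ is the product of its arc weights. $\delta_{uw}$ is the length of a shortest directed path from $u$ to $w$. $e_i$ is the $i$-th canonical basis vector, and $\operatorname{adj}$ denotes the adjugate matrix. *)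

(* Defs.v *)
From HB Require Import structures.
From mathcomp Require Import all_boot all_order all_algebra.
Set Implicit Arguments. Unset Strict Implicit. Unset Printing Implicit Defensive.
Import Order.TTheory GRing.Theory Num.Theory.
Local Open Scope ring_scope.

Section Graph.
Variables (R : numClosedFieldType) (N : nat) (A : 'M[R]_N).

Definition laplacian : 'M[R]_N :=
  \matrix_(i, j) ((i == j)%:R * (\sum_(k < N) A i k) - A i j).

Definition arc (u w : 'I_N) : bool := 0 < A w u.

Definition is_dpath (u w : 'I_N) (q : seq 'I_N) : bool :=
  [&& path arc u q, last u q == w & uniq (u :: q)].

Fixpoint pweight (u : 'I_N) (q : seq 'I_N) : R :=
  if q is v :: q' then A v u * pweight v q' else 1.

Definition sIL : 'M[{poly R}]_N := 'X%:M + map_mx polyC laplacian.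

Definition offpath (u : 'I_N) (q : seq 'I_N) : {set 'I_N} := ~: [set v in u :: q].

Definition Lbar (u : 'I_N) (q : seq 'I_N) : 'M[R]_#|offpath u q| :=
  \matrix_(i, j) laplacian (enum_val i) (enum_val j).

End Graph.

(* Main.v *)
Require Import Defs.
From HB Require Import structures.
From mathcomp Require Import all_boot all_order all_algebra all_fingroup.
Import Order.TTheory GRing.Theory Num.Theory.
Local Open Scope ring_scope.

Module Helpers.
Set Implicit Arguments. Unset Strict Implicit. Unset Printing Implicit Defensive.

Section Gen.
Variables (T : comRingType) (N : nat).
Implicit Types (M : 'M[T]_N).

Definition colset M (i : 'I_N) (v : 'I_N -> T) : 'M[T]_N :=
  \matrix_(a, b) if b == i then v a else M a b.
Definition dlt (j : 'I_N) : 'I_N -> T := fun a => (a == j)%:R.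
Definition isol (j : 'I_N) M : 'M[T]_N :=
  \matrix_(a, b) if (a == j) || (b == j) then (a == b)%:R else M a b.

Lemma cofactor_colset M i v k : cofactor (colset M i v) k i = cofactor M k i.
Proof.
rewrite /cofactor; congr (_ * \det _); apply/matrixP => a b.
by rewrite !mxE eq_sym (negPf (neq_lift _ _)).
Qed.

Lemma det_colset_dlt M i j : \det (colset M i (dlt j)) = cofactor M j i.
Proof.
rewrite (expand_det_col _ i) (bigD1 j) //= big1 ?addr0.
  by rewrite !mxE eqxx /dlt eqxx mul1r cofactor_colset.
by move=> a naj; rewrite !mxE eqxx /dlt (negPf naj) mul0r.
Qed.

Lemma adjE M i j : \adj M i j = \det (colset M i (dlt j)).
Proof. by rewrite det_colset_dlt mxE. Qed.

Lemma det_coldlt M i j : (forall a, M a i = dlt j a) -> \det M = cofactor M j i.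
Proof.
move=> h; rewrite (expand_det_col M i) (bigD1 j) //= big1 ?addr0.
  by rewrite h /dlt eqxx mul1r.
by move=> a naj; rewrite h /dlt (negPf naj) mul0r.
Qed.

Lemma det_agree M1 M2 i j :
  (forall a, M1 a i = dlt j a) -> (forall a, M2 a i = dlt j a) ->
  (forall a b, a != j -> M1 a b = M2 a b) -> \det M1 = \det M2.
Proof.
move=> h1 h2 h12; rewrite (det_coldlt h1) (det_coldlt h2) /cofactor.
congr (_ * \det _); apply/matrixP => a b; rewrite !mxE h12 //.
by rewrite eq_sym neq_lift.
Qed.

Lemma det_xcol M i j : i != j -> \det (xcol i j M) = - \det M.
Proof.
move=> nij; rewrite xcolE det_mulmx /tperm_mx det_perm odd_tperm nij.
by rewrite expr1 mulrN1.
Qed.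

Lemma adj_rec M i j : i != j ->
  \adj M i j = - \sum_(k | k != j) M k j * \adj (isol j M) i k.
Proof.
move=> nij; rewrite adjE (expand_det_col _ j) (bigD1 j) //=.
have -> : cofactor (colset M i (dlt j)) j j = 0.
  rewrite -(det_colset_dlt (colset M i (dlt j)) j j) -det_tr.
  apply: (@determinant_alternate _ _ _ i j nij) => b.
  rewrite !mxE eqxx (negPf nij) eqxx.
  by [].
rewrite mulr0 add0r -sumrN; apply: eq_bigr => k nkj.
have nji : j != i by rewrite eq_sym.
rewrite !mxE (negPf nji) -!det_colset_dlt -mulrN; congr (_ * _); rewrite -(@det_xcol _ i j) //.
apply: (@det_agree _ _ i j).
- by move=> a; rewrite !mxE (negPf nij) eqxx.
- by move=> a; rewrite !mxE tpermL eqxx (negPf nji) orbT.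
move=> a b naj; rewrite !mxE; case: tpermP => [->|->|/eqP nbi /eqP nbj].
- by rewrite eqxx (negPf nij) (negPf nji) eqxx orbT /dlt (negPf naj).
- by rewrite eqxx (negPf nij) eqxx.
- by rewrite (negPf nbi) (negPf nbj) (negPf naj).
Qed.
End Gen.

Lemma det_reindex (T : comRingType) m n (e : m = n) (g : 'I_m -> 'I_n)
  (ginj : injective g) (X : 'M[T]_n) :
  \det (\matrix_(a, b) X (g a) (g b)) = \det X.
Proof.
subst n; pose p := perm ginj.
have -> : \matrix_(a, b) X (g a) (g b) = row_perm p (col_perm p X).
  by apply/matrixP => a b; rewrite !mxE !permE.
rewrite row_permE col_permE !det_mulmx !det_perm odd_permV [\det X * _]mulrC signrMK.
by [].
Qed.

Section Blk.
Variables (T : comRingType) (N : nat) (S : {set 'I_N}) (X : 'M[T]_N).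

Definition gS (k : 'I_(#|S| + #|~: S|)) : 'I_N :=
  match split k with inl a => enum_val a | inr b => enum_val b end.

Lemma gSl a : gS (lshift _ a) = enum_val a.
Proof. by rewrite /gS -[lshift _ _]/(unsplit (inl _ a)) unsplitK. Qed.
Lemma gSr b : gS (rshift _ b) = enum_val b.
Proof. by rewrite /gS -[rshift _ _]/(unsplit (inr _ b)) unsplitK. Qed.

Lemma gS_inj : injective gS.
Proof.
move=> x y; case: (split_ordP x) => a ->; case: (split_ordP y) => b ->;
  rewrite ?gSl ?gSr.
- by move/enum_val_inj ->.
- move=> e; have := enum_valP a; have := enum_valP b; rewrite e inE.
  by move=> /negP.
- move=> e; have := enum_valP a; have := enum_valP b; rewrite e inE.
  by move=> h1 /negP /(_ h1).
- by move/enum_val_inj ->.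
Qed.

Lemma det_mask :
  \det (\matrix_(a, b) if (a \in S) && (b \in S) then X a b else (a == b)%:R)
  = \det (\matrix_(i, j) X (enum_val (A := S) i) (enum_val (A := S) j)).
Proof.
have e : (#|S| + #|~: S| = N)%N by rewrite cardsC card_ord.
rewrite -(det_reindex e gS_inj).
have -> : \matrix_(a, b) (\matrix_(a, b) if (a \in S) && (b \in S) then X a b
     else (a == b)%:R) (gS a) (gS b) =
   block_mx (\matrix_(i, j) X (enum_val (A := S) i) (enum_val (A := S) j)) 0 0 1%:M.
  apply/matrixP => x y.
  case: (split_ordP x) => a ->; case: (split_ordP y) => b ->;
    rewrite ?block_mxEul ?block_mxEur ?block_mxEdl ?block_mxEdr !mxE ?gSl ?gSr.
  - by rewrite !enum_valP.
  - have := enum_valP b; rewrite inE => /negPf ->; rewrite andbF.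
    have -> // : (enum_val a == enum_val b) = false.
    apply/negP => /eqP eab.
    by have := enum_valP b; rewrite -eab inE enum_valP.
  - have := enum_valP a; rewrite inE => /negPf ->.
    have -> // : (enum_val a == enum_val b) = false.
    apply/negP => /eqP eab.
    by have := enum_valP a; rewrite eab inE enum_valP.
  - have := enum_valP a; rewrite inE => /negPf ->.
    by rewrite (inj_eq enum_val_inj).
by rewrite det_ublock det1 mulr1.
Qed.
End Blk.

Lemma adj_diag (T : comRingType) n (X : 'M[T]_n) i : \adj X i i = \det (isol i X).
Proof.
rewrite (expand_det_row _ i) (bigD1 i) //= big1 ?addr0.
  rewrite !mxE eqxx mul1r /cofactor; congr (_ * \det _).
  by apply/matrixP => a b; rewrite !mxE ![lift i _ == i]eq_sym !(negPf (neq_lift _ _)).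
by move=> b nbi; rewrite !mxE eqxx /= eq_sym (negPf nbi) mul0r.
Qed.

Section G.
Variables (R : numClosedFieldType) (N : nat) (A : 'M[R]_N).
Hypothesis Anneg : forall i j, 0 <= A i j.

Definition msk (S : {set 'I_N}) : 'M[{poly R}]_N :=
  \matrix_(a, b) if (a \in S) && (b \in S) then sIL A a b else (a == b)%:R.

Lemma isol_msk S j : isol j (msk S) = msk (S :\ j).
Proof.
apply/matrixP => a b; rewrite !mxE !in_setD1.
case: (eqVneq a j) => [->|naj] //=.
case: (eqVneq b j) => [->|nbj] /=; first by rewrite !andbF.
by [].
Qed.

Lemma sIL_off k j : k != j -> sIL A k j = - (A k j)%:P.
Proof.
move=> nkj; rewrite /sIL /laplacian !mxE (negPf nkj) /= mulr0n add0r mul0r add0r.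
by rewrite polyCN.
Qed.

Lemma adj_msk_rec (S : {set 'I_N}) (i j : 'I_N) : i != j -> j \in S ->
  \adj (msk S) i j =
  \sum_(k | k != j) (if k \in S then (A k j)%:P * \adj (msk (S :\ j)) i k else 0).
Proof.
move=> nij jS; rewrite adj_rec // -sumrN isol_msk; apply: eq_bigr => k nkj.
rewrite mxE jS andbT; case: ifP => kS.
  by rewrite sIL_off // mulNr opprK.
by rewrite (negPf nkj) mul0r oppr0.
Qed.


Definition dpS (S : {set 'I_N}) u w q :=
  is_dpath A u w q && all (fun x => x \in S) (u :: q).

Lemma arc0 k j : ~~ Defs.arc A j k -> A k j = 0.
Proof.
rewrite /Defs.arc => h; have := Anneg k j; rewrite le0r => /orP[/eqP //|h'].
by rewrite h' in h.
Qed.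

Lemma dpS_cons (S S' : {set 'I_N}) (j k i : 'I_N) q : S' \subset S :\ j -> j \in S -> Defs.arc A j k ->
  dpS S' k i q -> dpS S j i (k :: q).
Proof.
move=> sS jS ajk /andP[/and3P[pq lq uq] aq].
have aq' : all (fun x => x \in S :\ j) (k :: q).
  by apply/allP => x /(allP aq) xS; apply: (subsetP sS).
apply/andP; split; last first.
  apply/allP => x; rewrite inE => /predU1P [-> //|/(allP aq') /setD1P []].
  by [].
apply/and3P; split => //=.
- by rewrite ajk.
- rewrite -/(uniq (k :: q)) uq andbT; apply/negP => /(allP aq') /setD1P [].
  by rewrite eqxx.
Qed.


Lemma dpS_single (S : {set 'I_N}) (j i : 'I_N) :
  i \in S -> j \in S -> i != j -> Defs.arc A j i -> dpS S j i [:: i].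
Proof.
move=> iS jS nij aji; rewrite /dpS /is_dpath /= aji eqxx iS jS !inE eq_sym nij.
by [].
Qed.

Lemma main_ind (n : nat) : forall (S : {set 'I_N}), (#|S| <= n)%N -> forall (i j : 'I_N),
  i \in S -> j \in S -> i != j ->
  ((forall q, ~~ dpS S j i q) -> \adj (msk S) i j = 0) /\
  (forall q, dpS S j i q -> (forall q', dpS S j i q' -> q' = q) ->
     \adj (msk S) i j = pweight A j q *: \det (msk (S :\: [set x in j :: q]))).
Proof.
elim: n => [|n IH] S hS i j iS jS nij.
  by move: hS; rewrite leqn0 => /eqP/cards0_eq S0; rewrite S0 inE in iS.
set S' := S :\ j.
have hS' : (#|S'| <= n)%N.
  by rewrite -ltnS (leq_trans _ hS) // [X in (_ < X)%N](cardsD1 j S) jS.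
have sS' : S' \subset S :\ j by [].
have iS' : i \in S' by rewrite in_setD1 nij iS.
have zero_term k : k != j -> (forall q, ~~ dpS S' k i q) -> k != i ->
    (if k \in S then (A k j)%:P * \adj (msk S') i k else 0) = 0.
  move=> nkj np nki; case: ifP => // kS.
  have kS' : k \in S' by rewrite in_setD1 nkj kS.
  have nik : i != k by rewrite eq_sym.
  by rewrite (proj1 (IH S' hS' i k iS' kS' nik)) ?mulr0.
split.
  move=> np; rewrite adj_msk_rec //; apply: big1 => k nkj.
  case: (boolP (Defs.arc A j k)) => ajk; last first.
    by rewrite arc0 // mul0r; case: ifP.
  case: (eqVneq k i) => [eki|nki].
    by subst k; have := np [:: i]; rewrite dpS_single.
  apply: zero_term => // q; apply/negP => /(dpS_cons sS' jS ajk) h.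
  by have := np (k :: q); rewrite h.
move=> [|v q'] dq uq.
  by move: dq => /andP[/and3P[_ /= /eqP eji _] _]; rewrite eji eqxx in nij.
have dq0 := dq.
move: dq0 => /andP[/and3P[/= /andP[ajv pq'] lq /and3P[jq vq' uq']] /= /andP[_ /andP[vS aq']]].
have nvj : v != j by apply: contraNneq jq => ->; rewrite mem_head.
rewrite adj_msk_rec // (bigD1 v) //= big1 ?addr0.
  rewrite vS.
  case: (eqVneq v i) => [evi|nvi].
    subst v; have q'0 : q' = [::].
      case: q' lq jq vq' {pq' uq' aq' uq dq} => [//|y r] /= lq _.
      by rewrite -(eqP lq) mem_last.
    subst q'; rewrite adj_diag isol_msk /= mulr1 mul_polyC.
    congr (_ *: \det (msk _)); apply/setP => x; rewrite !inE negb_or.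
    by case: (x == i); case: (x == j).
  have vS' : v \in S' by rewrite in_setD1 nvj vS.
  have niv : i != v by rewrite eq_sym.
  have dq' : dpS S' v i q'.
    rewrite /dpS /is_dpath pq' lq /= vq' uq' vS' /=.
    apply/allP => x xq; rewrite in_setD1 (allP aq' x xq) andbT.
    by apply: contraNneq jq => <-; rewrite in_cons xq orbT.
  have uq2 : forall q'', dpS S' v i q'' -> q'' = q'.
    by move=> q'' /(dpS_cons sS' jS ajv) /uq [].
  rewrite (proj2 (IH S' hS' i v iS' vS' niv) q' dq' uq2) mul_polyC scalerA /=.
  congr (_ *: \det (msk _)); apply/setP => x; rewrite !inE.
  by case: (x == j); case: (x == v); case: (x \in q').
move=> k /andP[nkj nkv].
case: (boolP (Defs.arc A j k)) => ajk; last by rewrite arc0 // mul0r; case: ifP.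
case: (eqVneq k i) => [eki|nki].
  subst k; have := uq [:: i] (dpS_single iS jS nij ajk).
  by case=> evi; rewrite evi eqxx in nkv.
apply: zero_term => // q0; apply/negP => /(dpS_cons sS' jS ajk) /uq [ekv _].
by rewrite ekv eqxx in nkv.
Qed.
End G.

Lemma pweight_gt0 (R : numClosedFieldType) (N : nat) (A : 'M[R]_N) u q :
  path (Defs.arc A) u q -> 0 < pweight A u q.
Proof.
elim: q u => [|v q IH] u /=; first by rewrite ltr01.
by move=> /andP[auv pq]; rewrite mulr_gt0 // IH.
Qed.

End Helpers.
Import Helpers.

Theorem theorem3 (R : numClosedFieldType) (N : nat) (A : 'M[R]_N)
  (Anneg : forall i j, 0 <= A i j) (Adiag : forall i, A i i = 0)
  (c o : 'I_N) (q : seq 'I_N) (hco : c != o)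
  (hpath : is_dpath A c o q)
  (huniq : forall q', is_dpath A c o q' -> q' = q) :
  let h := (\adj (sIL A)) o c in
  h = pweight A c q *: \det ('X%:M + map_mx polyC (Lbar A c q))
  /\ (forall z : R, root h z <-> eigenvalue (- Lbar A c q) z).
Proof.
move=> h.
have mskT : msk A setT = sIL A by apply/matrixP => a b; rewrite mxE !inE.
have dpT q' : dpS A setT c o q' = is_dpath A c o q'.
  rewrite /dpS; case: (is_dpath _ _ _ _) => //; rewrite andTb.
  by apply/allP => x; rewrite !inE.
have noc : o != c by rewrite eq_sym.
have hT : (#|[set: 'I_N]| <= N)%N by rewrite cardsT card_ord.
have := proj2 (main_ind Anneg hT (in_setT o) (in_setT c) noc) q.
rewrite dpT mskT => /(_ hpath) H.
have eqh : h = pweight A c q *: \det ('X%:M + map_mx polyC (Lbar A c q)).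
  rewrite /h (H _); last by move=> q'; rewrite dpT; apply: huniq.
  rewrite setTD; congr (_ *: _).
  rewrite /msk (det_mask (~: [set x in c :: q]) (sIL A)).
  congr (\det _); apply/matrixP => i j; rewrite !mxE.
  by rewrite (inj_eq enum_val_inj).
split => // z.
have wpos : 0 < pweight A c q by apply: pweight_gt0; case/and3P: hpath.
rewrite eigenvalue_root_char /char_poly /char_poly_mx map_mxN opprK eqh.
rewrite /root hornerZ mulf_eq0 (negPf (lt0r_neq0 wpos)) /=.
by [].
Qed.
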